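(* Let $(\mathbb{S},\Sigma)$ be a measurable space, let $\{\mu_n\}_{n=1,2,\ldots}$ be a sequence of finite measures on $(\mathbb{S},\Sigma)$, and let $\{f_n\}_{n=1,2,\ldots}$ be a sequence of measurable $[-\infty,+\infty]$-valued functions on $\mathbb{S}$. Then there exists $N\in\{0,1,2,\ldots\}$ such that $\{f_{n+N}\}_{n=1,2,\ldots}$ is uniformly integrable with respect to $\{\mu_{n+N}\}_{n=1,2,\ldots}$ if and only if $\{f_n\}_{n=1,2,\ldots}$ is asymptotically uniformly integrable with respect to $\{\mu_n\}_{n=1,2,\ldots}$.
   Context: A sequence of measurable $[-\infty,+\infty]$-valued functions $\{f_n\}$ is uniformly integrable (u.i.) with respect to a sequence of finite measures $\{\mu_n\}$ if $\lim_{K\to+\infty}\sup_{n=1,2,\ldots}\int_{\mathbb{S}}|f_n(s)|\,\mathbf{1}\{s: |f_n(s)|\ge K\}\,\mu_n(ds)=0$, and asymptotically uniformly integrable (a.u.i.) with respect to $\{\mu_n\}$ if $\lim_{K\to+\infty}\limsup_{n\to\infty}\int_{\mathbb{S}}|f_n(s)|\,\mathbf{1}\{s: |f_n(s)|\ge K\}\,\mu_n(ds)=0$. *)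

(* Defs.v *)
From HB Require Import structures.
From mathcomp Require Import all_boot all_order all_algebra.
From mathcomp Require Import all_classical all_reals all_analysis.
From mathcomp Require Import lebesgue_measure measurable_realfun lebesgue_integral.
Set Implicit Arguments. Unset Strict Implicit. Unset Printing Implicit Defensive.
Import Order.TTheory GRing.Theory Num.Theory.
Local Open Scope classical_set_scope.
Local Open Scope ring_scope.
Local Open Scope ereal_scope.

(* Sequences are indexed from 0 in Rocq: index n corresponds to the paper's n+1. *)

Definition tail_int d (T : measurableType d) (R : realType)
  (mu : {measure set T -> \bar R}) (f : T -> \bar R) (K : R) : \bar R :=
  \int[mu]_x (`|f x| * (\1_[set y : T | (K%:E <= `|f y|)%E] x)%:E).

Definition unif_integrable d (T : measurableType d) (R : realType)
  (mu : nat -> {finite_measure set T -> \bar R}) (f : nat -> T -> \bar R) : Prop :=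
  (fun K : R => ereal_sup (range (fun n => tail_int (mu n) (f n) K)))
    @ +oo%R --> 0.

Definition asym_unif_integrable d (T : measurableType d) (R : realType)
  (mu : nat -> {finite_measure set T -> \bar R}) (f : nat -> T -> \bar R) : Prop :=
  (fun K : R => limn_esup (fun n => tail_int (mu n) (f n) K))
    @ +oo%R --> 0.

(* Main.v *)
Require Import Defs.
From HB Require Import structures.
From mathcomp Require Import all_boot all_order all_algebra.
From mathcomp Require Import all_classical all_reals all_analysis.
From mathcomp Require Import lebesgue_measure measurable_realfun lebesgue_integral.
Import Order.TTheory GRing.Theory Num.Theory.
Local Open Scope classical_set_scope.
Local Open Scope ring_scope.
Local Open Scope ereal_scope.


Lemma cvg0_le {R : realType} {T : Type} {F : set_system T} {FF : Filter F}
  {u : T -> \bar R} : u @ F --> 0 ->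
  forall e : R, (0 < e)%R -> \forall x \near F, u x <= e%:E.
Proof.
move=> /fine_cvgP [ufin uc] e e0.
move/cvgrPdist_le : uc => /(_ e e0) uc.
near=> x.
have ux : u x \is a fin_num by near: x.
have h : (`|fine (u x)| <= e)%R by near: x; apply: filterS uc => y /=; rewrite sub0r normrN.

rewrite -(fineK ux) lee_fin (le_trans (ler_norm _))//; exact: h.
Unshelve. all: by end_near. Qed.

Lemma le_cvg0 {R : realType} {T : Type} {F : set_system T} {FF : Filter F}
  {u : T -> \bar R} : (forall x, 0 <= u x) ->
  (forall e : R, (0 < e)%R -> \forall x \near F, u x <= e%:E) -> u @ F --> 0.
Proof.
move=> u0 H; apply/fine_cvgP; split.
  have := H 1%R ltr01; apply: filterS => x ux.
  by rewrite ge0_fin_numE ?u0// (le_lt_trans ux)// ltry.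
apply/cvgrPdist_le => e e0; have := H e e0; apply: filterS => x ux /=.
have uxf : u x \is a fin_num by rewrite ge0_fin_numE ?u0// (le_lt_trans ux)// ltry.
rewrite sub0r normrN ger0_norm; last by rewrite fine_ge0 ?u0.
by rewrite -lee_fin fineK.
Qed.

Section tail.
Context d (T : measurableType d) (R : realType).
Variable mu : {measure set T -> \bar R}.
Variable f : T -> \bar R.
Hypothesis mf : measurable_fun setT f.

Let g (K : R) x := `|f x| * (\1_[set y : T | (K%:E <= `|f y|)%E] x)%:E.

Lemma gE K x : g K x = if K%:E <= `|f x| then `|f x| else 0.
Proof.
rewrite /g indicE; case: ifPn => h.
  by rewrite mem_set// mule1.
by rewrite memNset ?mule0//= ; apply/negP.
Qed.

Lemma g_ge0 K x : 0 <= g K x.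
Proof. by rewrite gE; case: ifP. Qed.

Lemma mg K : measurable_fun setT (g K).
Proof.
apply: emeasurable_funM; first exact: measurableT_comp.
apply: measurableT_comp => //; apply: measurable_indic.
rewrite -[X in measurable X]setTI.
by apply: emeasurable_fun_c_infty => //; exact: measurableT_comp.
Qed.

Lemma tail_ge0 K : 0 <= tail_int mu f K.
Proof. by apply: integral_ge0 => x _; exact: g_ge0. Qed.

Lemma tail_mono K1 K2 : (K1 <= K2)%R -> tail_int mu f K2 <= tail_int mu f K1.
Proof.
move=> K12; apply: ge0_le_integral => //.
- exact: mg.
- exact: mg.
move=> x _; rewrite -/(g K2 x) -/(g K1 x) !gE.
case: ifPn => h2; last by case: ifP.
by rewrite ifT// (le_trans _ h2)// lee_fin.
Qed.

Lemma tail_small K0 : tail_int mu f K0 < +oo ->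
  forall e : R, (0 < e)%R -> \forall K \near +oo%R, tail_int mu f K <= e%:E.
Proof.
move=> fin e e0.
have ig : mu.-integrable setT (g K0).
  apply/integrableP; split; first exact: mg.
  under eq_integral do rewrite gee0_abs ?g_ge0//.
  exact: fin.
have [] := @dominated_convergence _ _ _ mu setT measurableT
   (fun k => g (K0 + k%:R)) (cst 0) (g K0) (fun k => mg _) (measurable_cst _) _ ig _.
- apply: filterS (integrable_ae measurableT ig) => x /(_ I) gfin _.
  have : `|f x| \is a fin_num.
    move: gfin; rewrite gE; case: ifPn => // /negP h _.
    case: (f x) h => [r||] //=; by rewrite leey.
  move=> hfin; pose r := fine `|f x|; have fr : `|f x| = r%:E by rewrite fineK.
  apply: cvg_near_cst.
  have := nbhs_infty_gtr (r - K0); apply: filterS => k hk.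
  rewrite gE fr ifF// lee_fin; apply/negbTE; rewrite -ltNge.
  by rewrite -ltrBlDl.
- apply: aeW => x k _; rewrite gee0_abs ?g_ge0// !gE.
  case: ifPn => h; last by case: ifP.
  by rewrite ifT// (le_trans _ h)// lee_fin lerDl.
move=> _ _; rewrite integral0 => /cvg0_le /(_ e e0) /filter_ex [k /= hk].
have := nbhs_pinfty_gt (num_real (K0 + k%:R)); apply: filterS => K hK.
apply: le_trans hk; apply: tail_mono; exact: ltW.
Qed.
End tail.

Lemma oo_ge (N : nat) : \forall n \near \oo, (N <= n)%N.
Proof. by exists N. Qed.


Theorem theorem2p2 (d : measure_display) (T : measurableType d) (R : realType)
  (mu : nat -> {finite_measure set T -> \bar R}) (f : nat -> T -> \bar R)
  (hf : forall n, measurable_fun setT (f n)) :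
  (exists N : nat, unif_integrable (fun n => mu (n + N)%N) (fun n => f (n + N)%N))
  <-> asym_unif_integrable mu f.
Proof.
split.
- move=> [N hU]; apply: le_cvg0.
    move=> K; rewrite limn_esup_lim; apply: lime_ge; first exact: is_cvg_esups.
    apply: nearW => n; apply: (@le_trans _ _ (tail_int (mu n) (f n) K)).
      exact: tail_ge0.
    by apply: ereal_sup_ubound; exists n => /=.
  move=> e e0; have := @cvg0_le _ _ _ (@filter_filter R _ proper_pinfty_nbhs) _ hU e e0; apply: filterS => K hK.
  apply: le_trans hK; rewrite /limn_esup /limf_esup.
  apply: ereal_inf_lbound; exists [set n | (N <= n)%N]; first exact: oo_ge.
  congr (ereal_sup _); apply/seteqP; split => _ /= [n Nn <-].
    by exists (n - N)%N => //; rewrite subnK.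
  by exists (n + N)%N => //=; rewrite leq_addl.
- move=> hA.
  have PF := @proper_pinfty_nbhs R.
  have FF := @filter_filter R _ PF.
  have [K1 /= hK1] := filter_ex (@cvg0_le _ _ _ FF _ hA 1%R ltr01).
  have : limn_esup (fun n => tail_int (mu n) (f n) K1) < 2%:E.
    by apply: le_lt_trans hK1 _; rewrite lte_fin ltr1n.
  rewrite /limn_esup /limf_esup => /ereal_inf_lt [_ [V hV <-] hlt].
  case: hV => N _ hN.
  have fin n : (N <= n)%N -> tail_int (mu n) (f n) K1 < +oo.
    move=> Nn; apply: le_lt_trans (lt_trans hlt (ltry _)).
    by apply: ereal_sup_ubound; exists n => //; exact: hN.
  exists N; apply: le_cvg0.
    move=> K; apply: (@le_trans _ _ (tail_int (mu (0 + N)%N) (f (0 + N)%N) K)).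
      exact: tail_ge0.
    by apply: ereal_sup_ubound; exists 0%N.
  move=> e e0.
  have e20 : (0 < e / 2)%R by rewrite divr_gt0.
  have [K2 /= hK2] := filter_ex (@cvg0_le _ _ _ FF _ hA _ e20).
  have : limn_esup (fun n => tail_int (mu n) (f n) K2) < e%:E.
    by apply: le_lt_trans hK2 _; rewrite lte_fin ltr_pdivrMr// ltr_pMr// ltr1n.
  rewrite /limn_esup /limf_esup => /ereal_inf_lt [_ [V2 [M _ hM] <-] hlt2].
  have big n : (M <= n)%N -> tail_int (mu n) (f n) K2 <= e%:E.
    move=> Mn; apply/ltW; apply: le_lt_trans hlt2.
    by apply: ereal_sup_ubound; exists n => //; exact: hM.
  have hfin : forall i : 'I_M, \forall K \near +oo%R,
      (N <= i)%N -> tail_int (mu i) (f i) K <= e%:E.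
    move=> i; case: (leqP N i) => Ni.
      have := @tail_small _ _ _ (mu i) (f i) (hf i) K1 (fin i Ni) e e0.
      by apply: filterS => K hK _.
    by apply: nearW => K.
  have H1 := filter_forall FF hfin.
  have H2 := nbhs_pinfty_gt (num_real K2).
  near=> K.
  apply: ge_ereal_sup => _ [n _ <-].
  have [hn|hn] := ltnP (n + N) M.
    have := near H1 K; move=> /(_ _) /(_ (Ordinal hn)); apply => //=; exact: leq_addl.
  apply: le_trans (big _ hn).
  apply: (@tail_mono _ _ _ (mu (n + N)%N) (f (n + N)%N) (hf _)).
  by apply/ltW; near: K.
Unshelve. all: by end_near.
Qed.
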